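(* Let $\nu,\nu'$ be slack vectors and let $\Gamma\in\mathbb L_2^\nu$. Assume $\|\nu'\|_\infty\le\frac1{2d}$. (1) If for every edge $ij\in\mathcal E$ we have $\Gamma_i+\nu'_{ij}\in\Sigma_d$ and $\Gamma_j+\nu'_{ji}\in\Sigma_d$, then there exists $\Gamma'\in\mathbb L_2^{\nu'}$ with $\|\Gamma-\Gamma'\|_1\le2\|\nu-\nu'\|_1$. (2) If $\nu=0$, then there exists $\Gamma'\in\mathbb L_2^{\nu'}$ with $\|\Gamma-\Gamma'\|_1\le6d\deg(G)\|\nu'\|_1$.
   Context: Let $G=(\mathcal V,\mathcal E)$ be a graph with $\mathcal V=\{1,\dots,n\}$, edges ordered pairs $ij$, maximum degree $\deg(G)$, and $d\ge1$; $\Sigma_d$ is the probability simplex in $\mathbb R^d$ and $\mathbb 1$ the all-ones vector. A marginal vector $\Gamma$ consists of $\Gamma_i\in\mathbb R^d$ ($i\in\mathcal V$) and $\Gamma_{ij}\in\mathbb R^{d\times d}$ ($ij\in\mathcal E$); $\|\cdot\|_1$ is the sum of absolute values of all entries and $\|\cdot\|_\infty$ the maximum absolute entry. A slack vector $\nu$ consists of vectors $\nu_{ij},\nu_{ji}\in\mathbb R^d$ for each $ij\in\mathcal E$ with $\nu_{ij}^\top\mathbb 1=\nu_{ji}^\top\mathbb 1=0$. The slack polytope is $\mathbb L_2^\nu=\{\Gamma\ge0:\Gamma_i\in\Sigma_d\ \forall i;\ \Gamma_{ij}\mathbb 1=\Gamma_i+\nu_{ij},\ \Gamma_{ij}^\top\mathbb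 1=\Gamma_j+\nu_{ji},\ \mathbb 1^\top\Gamma_{ij}\mathbb 1=1\ \forall ij\in\mathcal E\}$; $\mathbb L_2=\mathbb L_2^0$. *)

(* Defs.v *)
From HB Require Import structures.
From mathcomp Require Import all_boot all_order all_algebra.
Set Implicit Arguments. Unset Strict Implicit. Unset Printing Implicit Defensive.
Import Order.TTheory GRing.Theory Num.Theory.
Local Open Scope ring_scope.

(* Vertices are 'I_n, labels are 'I_d.  A graph is given by its edge set
   E : {set 'I_n * 'I_n} of ordered pairs ij (one orientation per edge).
   A marginal vector Gamma is a pair (Gv, Ge):
     Gv i : 'I_d -> R            (Gamma_i),
     Ge i j : 'I_d -> 'I_d -> R  (Gamma_ij, only relevant for ij in E).
   A slack vector nu : 'I_n -> 'I_n -> 'I_d -> R gives nu_ij = nu i j and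
   nu_ji = nu j i for ij in E (values off the edges are irrelevant). *)

Section Defs.
Variables (R : realFieldType) (n d : nat).

Definition in_simplex (x : 'I_d -> R) : Prop :=
  (forall a, 0 <= x a) /\ \sum_a x a = 1.

Definition slack_vector (E : {set 'I_n * 'I_n}) (nu : 'I_n -> 'I_n -> 'I_d -> R) : Prop :=
  forall p, p \in E -> \sum_a nu p.1 p.2 a = 0 /\ \sum_a nu p.2 p.1 a = 0.

Definition in_L2nu (E : {set 'I_n * 'I_n}) (nu : 'I_n -> 'I_n -> 'I_d -> R)
  (Gv : 'I_n -> 'I_d -> R) (Ge : 'I_n -> 'I_n -> 'I_d -> 'I_d -> R) : Prop :=
  (forall i, in_simplex (Gv i)) /\
  (forall p, p \in E ->
     [/\ (forall a b, 0 <= Ge p.1 p.2 a b),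
         (forall a, \sum_b Ge p.1 p.2 a b = Gv p.1 a + nu p.1 p.2 a),
         (forall b, \sum_a Ge p.1 p.2 a b = Gv p.2 b + nu p.2 p.1 b) &
         \sum_a \sum_b Ge p.1 p.2 a b = 1]).

Definition marg_dist1 (E : {set 'I_n * 'I_n})
  (Gv Gv' : 'I_n -> 'I_d -> R) (Ge Ge' : 'I_n -> 'I_n -> 'I_d -> 'I_d -> R) : R :=
  \sum_i \sum_a `|Gv i a - Gv' i a|
  + \sum_(p in E) \sum_a \sum_b `|Ge p.1 p.2 a b - Ge' p.1 p.2 a b|.

Definition slack_norm1 (E : {set 'I_n * 'I_n}) (nu : 'I_n -> 'I_n -> 'I_d -> R) : R :=
  \sum_(p in E) \sum_a (`|nu p.1 p.2 a| + `|nu p.2 p.1 a|).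

Definition slack_norminf (E : {set 'I_n * 'I_n}) (nu : 'I_n -> 'I_n -> 'I_d -> R) : R :=
  \big[Num.max/0]_(p in E) \big[Num.max/0]_a Num.max `|nu p.1 p.2 a| `|nu p.2 p.1 a|.

Definition slack_sub (nu nu' : 'I_n -> 'I_n -> 'I_d -> R) : 'I_n -> 'I_n -> 'I_d -> R :=
  fun i j a => nu i j a - nu' i j a.

End Defs.

Definition max_deg (n : nat) (E : {set 'I_n * 'I_n}) : nat :=
  \max_(i : 'I_n) #|[set p in E | (p.1 == i) || (p.2 == i)]|.

(* Main.v *)
Require Import Defs.
From HB Require Import structures.
From mathcomp Require Import all_boot all_order all_algebra.
From mathcomp Require Import ring lra.
Import Order.TTheory GRing.Theory Num.Theory.
Local Open Scope ring_scope.

Section Coupling.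
Variables (R : realFieldType) (d : nat).
Implicit Types (P : 'I_d -> 'I_d -> R) (r : 'I_d -> R).

Definition rs P a := \sum_b P a b.
Definition cs P b := \sum_a P a b.
Definition alph r r' a : R := if r' a < r a then r' a / r a else 1.
Definition P1 P r' c' a b := P a b * alph (rs P) r' a * alph (cs P) c' b.
Definition uu P r' c' a := r' a - \sum_b P1 P r' c' a b.
Definition vv P r' c' b := c' b - \sum_a P1 P r' c' a b.
Definition mm P r' c' := 1 - \sum_a \sum_b P1 P r' c' a b.
Definition fixc P r' c' a b := P1 P r' c' a b + uu P r' c' a * vv P r' c' b / mm P r' c'.

Lemma alph_ge0 r r' a : 0 <= r a -> 0 <= r' a -> 0 <= alph r r' a.
Proof.
move=> h h'; rewrite /alph; case: ifP => // lt.
by apply: divr_ge0.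
Qed.

Lemma alph_le1 r r' a : 0 <= r' a -> alph r r' a <= 1.
Proof.
move=> h'; rewrite /alph; case: ifP => // lt.
have rp : 0 < r a by apply: le_lt_trans lt.
by rewrite ler_pdivrMr // mul1r ltW.
Qed.

Lemma alph_mul r r' a : 0 <= r' a -> r a * alph r r' a <= r' a.
Proof.
move=> h'; rewrite /alph; case: ifP => lt.
  have rp : 0 < r a by apply: le_lt_trans lt.
  by rewrite mulrCA mulfV ?gt_eqF // mulr1.
by rewrite mulr1 leNgt lt.
Qed.

Lemma alph_def r r' a : 0 <= r' a ->
  2 * (r a * (1 - alph r r' a)) = `|r a - r' a| + (r a - r' a).
Proof.
move=> h'; rewrite /alph; case: ifP => lt.
  have rp : 0 < r a by apply: le_lt_trans lt.
  rewrite mulrBr mulr1 mulrCA mulfV ?gt_eqF // mulr1 ger0_norm; last by rewrite subr_ge0 ltW.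
  lra.
rewrite subrr mulr0 mulr0 ler0_norm; last by rewrite subr_le0 leNgt lt.
lra.
Qed.


Lemma keyl (F : 'I_d -> R) (m : R) : (forall a, 0 <= F a) -> \sum_a F a = m ->
  forall a, F a * (m / m) = F a.
Proof.
move=> h hs a; have [m0|m0] := eqVneq m 0.
  by rewrite (@psumr_eq0P _ _ predT _ (fun i _ => h i) (etrans hs m0) a isT) mul0r.
by rewrite mulfV // mulr1.
Qed.

Section Main.
Variables (P : 'I_d -> 'I_d -> R) (r' c' : 'I_d -> R).
Hypotheses (hP : forall a b, 0 <= P a b) (h1 : \sum_a \sum_b P a b = 1)
  (hr' : in_simplex r') (hc' : in_simplex c').

Let al := alph (rs P) r'.
Let be := alph (cs P) c'.

Lemma al01 a : 0 <= al a /\ al a <= 1.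
Proof.
split; [apply: alph_ge0; [apply: sumr_ge0 => b _; exact: hP| exact: hr'.1]|].
apply: alph_le1; exact: hr'.1.
Qed.

Lemma be01 b : 0 <= be b /\ be b <= 1.
Proof.
split; [apply: alph_ge0; [apply: sumr_ge0 => a _; exact: hP| exact: hc'.1]|].
apply: alph_le1; exact: hc'.1.
Qed.

Lemma P1_ge0 a b : 0 <= P1 P r' c' a b.
Proof.
rewrite /P1; have [h1a _] := al01 a; have [h1b _] := be01 b.
by rewrite mulr_ge0 // mulr_ge0.
Qed.

Lemma P1_le a b : P1 P r' c' a b <= P a b.
Proof.
rewrite /P1 -mulrA; have [h1a h2a] := al01 a; have [h1b h2b] := be01 b.
rewrite -[leRHS]mulr1; apply: ler_wpM2l => //; exact: mulr_ile1.
Qed.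

Lemma P1_row a : \sum_b P1 P r' c' a b <= r' a.
Proof.
apply: le_trans (_ : \sum_b P a b * al a <= _).
  apply: ler_sum => b _; rewrite /P1 -/al -/be.
  have [h1a h2a] := al01 a; have [h1b h2b] := be01 b.
  rewrite -[leRHS]mulr1; apply: ler_wpM2l => //; exact: mulr_ge0.
rewrite -mulr_suml; apply: alph_mul; exact: hr'.1.
Qed.

Lemma P1_col b : \sum_a P1 P r' c' a b <= c' b.
Proof.
apply: le_trans (_ : \sum_a P a b * be b <= _).
  apply: ler_sum => a _; rewrite /P1 -/al -/be.
  have [h1a h2a] := al01 a; have [h1b h2b] := be01 b.
  rewrite -mulrA; apply: ler_wpM2l => //; rewrite -[leRHS]mul1r.
  by apply: ler_wpM2r.
rewrite -mulr_suml; apply: alph_mul; exact: hc'.1.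
Qed.

Lemma uu_ge0 a : 0 <= uu P r' c' a.
Proof. by rewrite /uu subr_ge0 P1_row. Qed.
Lemma vv_ge0 b : 0 <= vv P r' c' b.
Proof. by rewrite /vv subr_ge0 P1_col. Qed.

Lemma sum_uu : \sum_a uu P r' c' a = mm P r' c'.
Proof. by rewrite /uu /mm sumrB hr'.2. Qed.
Lemma sum_vv : \sum_b vv P r' c' b = mm P r' c'.
Proof. by rewrite /vv /mm sumrB hc'.2 [X in _ - X = _]exchange_big. Qed.

Let FX := fixc P r' c'.

Lemma fix_ge0 a b : 0 <= FX a b.
Proof.
rewrite /FX /fixc addr_ge0 ?P1_ge0 // mulr_ge0 ?mulr_ge0 ?uu_ge0 ?vv_ge0 //.
by rewrite invr_ge0 -sum_uu sumr_ge0 // => i _; apply: uu_ge0.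
Qed.

Lemma fix_row a : \sum_b FX a b = r' a.
Proof.
rewrite /FX /fixc big_split /= -mulr_suml -mulr_sumr sum_vv -mulrA.
rewrite (keyl _ _ uu_ge0 sum_uu).
by rewrite /uu addrC subrK.
Qed.

Lemma fix_col b : \sum_a FX a b = c' b.
Proof.
rewrite /FX /fixc big_split -[X in _ + X = _]mulr_suml -[X in _ + X / _ = _]mulr_suml.
rewrite sum_uu.
rewrite [mm _ _ _ * _]mulrC -mulrA.
rewrite (keyl _ _ vv_ge0 sum_vv).
by rewrite /vv addrC subrK.
Qed.

Lemma fix_tot : \sum_a \sum_b FX a b = 1.
Proof. by rewrite (eq_bigr _ (fun a _ => fix_row a)) hr'.2. Qed.

Lemma mm_eq : mm P r' c' = \sum_a \sum_b (P a b - P1 P r' c' a b).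
Proof.
by rewrite /mm -h1 -sumrB; apply: eq_bigr => a _; rewrite sumrB.
Qed.

Lemma mm_le : mm P r' c' <= \sum_a rs P a * (1 - al a) + \sum_b cs P b * (1 - be b).
Proof.
rewrite mm_eq.
apply: le_trans (_ : \sum_a \sum_b (P a b * (1 - al a) + P a b * (1 - be b)) <= _).
  apply: ler_sum => a _; apply: ler_sum => b _.
  have [h1a h2a] := al01 a; have [h1b h2b] := be01 b.
  have := hP a b; rewrite /P1 -/al -/be => hp.
  have : 0 <= P a b * (1 - al a) * (1 - be b).
    by rewrite mulr_ge0 ?mulr_ge0 // subr_ge0.
  move=> hh; nra.
rewrite (eq_bigr (fun a => \sum_b P a b * (1 - al a) + \sum_b P a b * (1 - be b))); last first.
  by move=> a _; rewrite big_split.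
rewrite big_split; apply: lerD; rewrite le_eqVlt; apply/orP; left; apply/eqP.
  by apply: eq_bigr => a _; rewrite -mulr_suml.
rewrite exchange_big; apply: eq_bigr => b _; rewrite -mulr_suml //.
Qed.

Lemma fix_dist : \sum_a \sum_b `|P a b - FX a b| <=
   \sum_a `|rs P a - r' a| + \sum_b `|cs P b - c' b|.
Proof.
have mm0 : 0 <= mm P r' c' by rewrite -sum_uu sumr_ge0 // => i _; apply: uu_ge0.
apply: le_trans (_ : \sum_a \sum_b ((P a b - P1 P r' c' a b) +
    uu P r' c' a * vv P r' c' b / mm P r' c') <= _).
  apply: ler_sum => a _; apply: ler_sum => b _.
  rewrite /FX /fixc opprD addrA; apply: le_trans (ler_normD _ _) _.
  rewrite normrN ger0_norm ?subr_ge0 ?P1_le // ger0_norm //.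
  by rewrite mulr_ge0 ?mulr_ge0 ?uu_ge0 ?vv_ge0 ?invr_ge0.
rewrite (eq_bigr (fun a => \sum_b (P a b - P1 P r' c' a b) +
    \sum_b uu P r' c' a * vv P r' c' b / mm P r' c')); last first.
  by move=> a _; rewrite big_split.
rewrite big_split /= -mm_eq.
have -> : \sum_a \sum_b uu P r' c' a * vv P r' c' b / mm P r' c' =
    mm P r' c' * (mm P r' c' / mm P r' c').
  rewrite (eq_bigr (fun a => uu P r' c' a * mm P r' c' / mm P r' c')); last first.
    by move=> a _; rewrite -mulr_suml -mulr_sumr sum_vv.
  by rewrite -mulr_suml -mulr_suml sum_uu mulrA.
have -> : mm P r' c' * (mm P r' c' / mm P r' c') = mm P r' c'.
  by have [->|m0] := eqVneq (mm P r' c') 0; rewrite ?mul0r // mulfV // mulr1.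
have hm := mm_le.
have ha : 2 * \sum_a rs P a * (1 - al a) = \sum_a `|rs P a - r' a|.
  rewrite mulr_sumr (eq_bigr (fun a => `|rs P a - r' a| + (rs P a - r' a))); last first.
    by move=> a _; rewrite alph_def //; exact: hr'.1.
  by rewrite big_split /= sumrB hr'.2 /rs h1 subrr addr0.
have hb : 2 * \sum_b cs P b * (1 - be b) = \sum_b `|cs P b - c' b|.
  rewrite mulr_sumr (eq_bigr (fun b => `|cs P b - c' b| + (cs P b - c' b))); last first.
    by move=> b _; rewrite alph_def //; exact: hc'.1.
  by rewrite big_split /= sumrB hc'.2 /cs exchange_big h1 subrr addr0.
lra.
Qed.

End Main.
End Coupling.

Arguments fixc {R d}.

Lemma coupling (R : realFieldType) (d : nat) (P : 'I_d -> 'I_d -> R) (r' c' : 'I_d -> R) :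
  (forall a b, 0 <= P a b) -> \sum_a \sum_b P a b = 1 -> in_simplex r' -> in_simplex c' ->
  [/\ (forall a b, 0 <= fixc P r' c' a b),
      (forall a, \sum_b fixc P r' c' a b = r' a),
      (forall b, \sum_a fixc P r' c' a b = c' b),
      \sum_a \sum_b fixc P r' c' a b = 1 &
      \sum_a \sum_b `|P a b - fixc P r' c' a b| <=
        \sum_a `|\sum_b P a b - r' a| + \sum_b `|\sum_a P a b - c' b|].
Proof.
move=> hP h1 hr hc; split.
- exact: fix_ge0.
- exact: fix_row.
- exact: fix_col.
- exact: fix_tot.
- exact: fix_dist.
Qed.

Section MaxLemmas.
Variable (R : realFieldType).


Lemma my_bigmax_ge0 (I : finType) (P : pred I) (F : I -> R) :
  (forall i, P i -> 0 <= F i) -> 0 <= \big[Num.max/0]_(i | P i) F i.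
Proof.
move=> h; apply: (big_ind (fun x => 0 <= x)) => //.
by move=> x y hx hy; rewrite le_max hx.
Qed.

Lemma my_bigmax_le (I : finType) (P : pred I) (F : I -> R) (c : R) :
  0 <= c -> (forall i, P i -> F i <= c) -> \big[Num.max/0]_(i | P i) F i <= c.
Proof.
move=> c0 h; apply: (big_ind (fun x => x <= c)) => //.
by move=> x y hx hy; rewrite ge_max hx hy.
Qed.

Lemma my_le_bigmax (I : finType) (P : pred I) (F : I -> R) j :
  P j -> F j <= \big[Num.max/0]_(i | P i) F i.
Proof. by move=> hj; rewrite (bigD1 j) //= le_max lexx. Qed.

Lemma my_bigmax_le_sum (I : finType) (P : pred I) (F : I -> R) :
  (forall i, P i -> 0 <= F i) -> \big[Num.max/0]_(i | P i) F i <= \sum_(i | P i) F i.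
Proof.
move=> h; suff /andP[] : 0 <= \big[Num.max/0]_(i | P i) F i <= \sum_(i | P i) F i by [].
apply: (@big_ind2 R R (fun x y => 0 <= x <= y) 0 Num.max 0 +%R) => //; first by rewrite lexx.
- move=> x1 x2 y1 y2 /andP[h1 h2] /andP[h3 h4]; apply/andP; split.
    by rewrite le_max h1.
  rewrite ge_max; apply/andP; split; lra.
- by move=> i hi; rewrite (h i hi) lexx.
Qed.

Lemma sum_if_eq (n : nat) (x : 'I_n) (F : 'I_n -> R) :
  \sum_i (if x == i then F i else 0) = F x.
Proof.
rewrite (bigD1 x) //= eqxx big1 ?addr0 // => i hi.
by rewrite eq_sym (negbTE hi).
Qed.

Lemma zero_sum_bound (d : nat) (x : 'I_d -> R) a :
  \sum_b x b = 0 -> 2 * `|x a| <= \sum_b `|x b|.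
Proof.
move=> hs; rewrite (bigD1 a) //=.
move: hs; rewrite (bigD1 a) //= => hs.
have h3 : \sum_(b | b != a) x b = - x a by apply/eqP; rewrite -subr_eq0 opprK addrC hs.
have h2 : `|\sum_(b | b != a) x b| <= \sum_(b | b != a) `|x b| by apply: ler_norm_sum.
rewrite h3 normrN in h2; lra.
Qed.
End MaxLemmas.

Arguments my_bigmax_ge0 {R I P F}.
Arguments my_bigmax_le {R I P F c}.
Arguments my_le_bigmax {R I P F j}.
Arguments my_bigmax_le_sum {R I P F}.
Arguments sum_if_eq {R n}.
Arguments zero_sum_bound {R d x}.
Arguments coupling {R d P r' c'}.

Theorem lemma7 (R : realFieldType) (n d : nat) (E : {set 'I_n * 'I_n})
  (nu nu' : 'I_n -> 'I_n -> 'I_d -> R)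
  (Gv : 'I_n -> 'I_d -> R) (Ge : 'I_n -> 'I_n -> 'I_d -> 'I_d -> R) :
  (0 < d)%N ->
  (forall p, p \in E -> p.1 != p.2) ->
  (forall p, p \in E -> (p.2, p.1) \notin E) ->
  slack_vector E nu -> slack_vector E nu' ->
  in_L2nu E nu Gv Ge ->
  slack_norminf E nu' <= 1 / (2 * d%:R) ->
  ((forall p, p \in E ->
      in_simplex (fun a => Gv p.1 a + nu' p.1 p.2 a) /\
      in_simplex (fun a => Gv p.2 a + nu' p.2 p.1 a)) ->
   exists Gv' Ge', in_L2nu E nu' Gv' Ge' /\
     marg_dist1 E Gv Gv' Ge Ge' <= 2 * slack_norm1 E (slack_sub nu nu'))
  /\
  ((forall p, p \in E -> forall a, nu p.1 p.2 a = 0 /\ nu p.2 p.1 a = 0) ->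
   exists Gv' Ge', in_L2nu E nu' Gv' Ge' /\
     marg_dist1 E Gv Gv' Ge Ge' <= 6 * d%:R * (max_deg E)%:R * slack_norm1 E nu').
Proof.
move=> d0 hneq hasym snu snu' [hGv hGe] hinf; split.
- move=> hs.
  pose Ge' := fun i j => fixc (Ge i j) (fun a => Gv i a + nu' i j a) (fun b => Gv j b + nu' j i b).
  exists Gv, Ge'; split.
  + split => // p hp; have [hs1 hs2] := hs p hp; have [g0 gr gc gt] := hGe p hp.
    by have [c1 c2 c3 c4 _] := coupling g0 gt hs1 hs2; split.
  + rewrite /marg_dist1 big1 ?add0r; last first.
      by move=> i _; rewrite big1 // => a _; rewrite subrr normr0.
    apply: le_trans (_ : slack_norm1 E (slack_sub nu nu') <= _); last first.
      have h0 : 0 <= slack_norm1 E (slack_sub nu nu').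
        by apply: sumr_ge0 => p _; apply: sumr_ge0 => a _; rewrite addr_ge0.
      lra.
    rewrite /slack_norm1; apply: ler_sum => p hp.
    have [hs1 hs2] := hs p hp; have [g0 gr gc gt] := hGe p hp.
    have [_ _ _ _ c5] := coupling g0 gt hs1 hs2.
    apply: le_trans c5 _; rewrite big_split /=.
    rewrite le_eqVlt; apply/orP; left; apply/eqP; congr (_ + _); apply: eq_bigr => a _.
      by rewrite gr /slack_sub opprD addrACA subrr add0r.
    by rewrite gc /slack_sub opprD addrACA subrr add0r.
- move=> hz.
  pose m := fun p : 'I_n * 'I_n =>
    \big[Num.max/0]_a Num.max `|nu' p.1 p.2 a| `|nu' p.2 p.1 a|.
  pose mu := fun i : 'I_n =>
    \big[Num.max/0]_(p in E | (p.1 == i) || (p.2 == i)) m p.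
  pose Gv' := fun i a => (1 - d%:R * mu i) * Gv i a + mu i.
  pose Ge' := fun i j => fixc (Ge i j) (fun a => Gv' i a + nu' i j a)
                              (fun b => Gv' j b + nu' j i b).
  have m0 p : 0 <= m p.
    by apply: my_bigmax_ge0 => a _; rewrite le_max normr_ge0.
  have mu0 i : 0 <= mu i by apply: my_bigmax_ge0 => p _; apply: m0.
  have nu_m1 p a : `|nu' p.1 p.2 a| <= m p.
    by rewrite /m (bigD1 a) //= le_max; apply/orP; left; rewrite le_max lexx.
  have nu_m2 p a : `|nu' p.2 p.1 a| <= m p.
    by rewrite /m (bigD1 a) //= le_max; apply/orP; left; rewrite le_max lexx orbT.
  have m_mu1 p : p \in E -> m p <= mu p.1.
    by move=> hp; rewrite /mu; apply: (my_le_bigmax (F := m)); rewrite hp eqxx.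
  have m_mu2 p : p \in E -> m p <= mu p.2.
    by move=> hp; rewrite /mu; apply: (my_le_bigmax (F := m)); rewrite hp eqxx orbT.
  have dpos : 0 < d%:R :> R by rewrite ltr0n.
  have mu_inf i : mu i <= 1 / (2 * d%:R).
    apply: le_trans hinf; apply: my_bigmax_le.
      by rewrite /slack_norminf; apply: my_bigmax_ge0 => p _; apply: m0.
    move=> p /andP[hp _]; rewrite /slack_norminf.
    exact: (my_le_bigmax (F := m)).
  have dmu i : d%:R * mu i <= 1 / 2.
    apply: le_trans (ler_wpM2l (ltW dpos) (mu_inf i)) _.
    rewrite le_eqVlt; apply/orP; left; apply/eqP; field.
    by rewrite gt_eqF.
  have Gv'0 i a : mu i <= Gv' i a.
    rewrite /Gv' lerDr; apply: mulr_ge0; last exact: (hGv i).1.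
    by have := dmu i; lra.
  have Gv'S i : in_simplex (Gv' i).
    split; first by move=> a; apply: le_trans (mu0 i) (Gv'0 i a).
    rewrite /Gv' big_split /= -mulr_sumr (hGv i).2 sumr_const card_ord -mulr_natl.
    lra.
  have Gv'dist i : \sum_a `|Gv i a - Gv' i a| <= 2 * d%:R * mu i.
    apply: le_trans (_ : \sum_a (d%:R * mu i * Gv i a + mu i) <= _).
      apply: ler_sum => a _; have g0 := (hGv i).1 a.
      have h1 : 0 <= d%:R * mu i * Gv i a by rewrite mulr_ge0 ?mulr_ge0 ?ler0n.
      have -> : Gv i a - Gv' i a = d%:R * mu i * Gv i a - mu i.
        by rewrite /Gv'; ring.
      have := mu0 i; rewrite ler_norml => h2; apply/andP; split; lra.
    rewrite big_split /= -mulr_sumr (hGv i).2 sumr_const card_ord -mulr_natl.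
    lra.
  have rowS p : p \in E -> in_simplex (fun a => Gv' p.1 a + nu' p.1 p.2 a) /\
                           in_simplex (fun a => Gv' p.2 a + nu' p.2 p.1 a).
    move=> hp; have [s1 s2] := snu' p hp; split; split.
    - move=> a; have h1 := Gv'0 p.1 a; have h2 := nu_m1 p a; have h3 := m_mu1 p hp.
      have h4 := ler_norm (- nu' p.1 p.2 a); rewrite normrN in h4; lra.
    - by rewrite big_split /= (Gv'S _).2 s1 addr0.
    - move=> a; have h1 := Gv'0 p.2 a; have h2 := nu_m2 p a; have h3 := m_mu2 p hp.
      have h4 := ler_norm (- nu' p.2 p.1 a); rewrite normrN in h4; lra.
    - by rewrite big_split /= (Gv'S _).2 s2 addr0.
  exists Gv', Ge'; split.
  + split => // p hp; have [g0 gr gc gt] := hGe p hp; have [r1 r2] := rowS p hp.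
    by have [c1 c2 c3 c4 _] := coupling g0 gt r1 r2; split.
  have hedge p : p \in E -> \sum_a \sum_b `|Ge p.1 p.2 a b - Ge' p.1 p.2 a b| <=
      2 * d%:R * mu p.1 + 2 * d%:R * mu p.2 +
      \sum_a (`|nu' p.1 p.2 a| + `|nu' p.2 p.1 a|).
    move=> hp; have [g0 gr gc gt] := hGe p hp; have [r1 r2] := rowS p hp.
    have [_ _ _ _ c5] := coupling g0 gt r1 r2.
    apply: le_trans c5 _; rewrite [X in _ <= _ + X]big_split /=.
    have e1 : \sum_a `|\sum_b Ge p.1 p.2 a b - (Gv' p.1 a + nu' p.1 p.2 a)| <=
        2 * d%:R * mu p.1 + \sum_a `|nu' p.1 p.2 a|.
      apply: le_trans (_ : \sum_a (`|Gv p.1 a - Gv' p.1 a| + `|nu' p.1 p.2 a|) <= _).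
        apply: ler_sum => a _; rewrite gr (hz p hp a).1 addr0 opprD addrA.
        by apply: le_trans (ler_normD _ _) _; rewrite normrN.
      by rewrite big_split /=; apply: lerD => //; apply: Gv'dist.
    have e2 : \sum_b `|\sum_a Ge p.1 p.2 a b - (Gv' p.2 b + nu' p.2 p.1 b)| <=
        2 * d%:R * mu p.2 + \sum_a `|nu' p.2 p.1 a|.
      apply: le_trans (_ : \sum_a (`|Gv p.2 a - Gv' p.2 a| + `|nu' p.2 p.1 a|) <= _).
        apply: ler_sum => a _; rewrite gc (hz p hp a).2 addr0 opprD addrA.
        by apply: le_trans (ler_normD _ _) _; rewrite normrN.
      by rewrite big_split /=; apply: lerD => //; apply: Gv'dist.
    lra.
  set N := slack_norm1 E nu'.
  have N0 : 0 <= N.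
    by apply: sumr_ge0 => p _; apply: sumr_ge0 => a _; rewrite addr_ge0.
  have A : \sum_i mu i <= N.
    apply: le_trans (_ : \sum_i \sum_(p in E | (p.1 == i) || (p.2 == i)) m p <= _).
      by apply: ler_sum => i _; apply: my_bigmax_le_sum => p _; apply: m0.
    rewrite (eq_bigr (fun i => \sum_(p in E) (if (p.1 == i) || (p.2 == i) then m p else 0))); last first.
      by move=> i _; rewrite big_mkcondr.
    rewrite exchange_big /= /N /slack_norm1; apply: ler_sum => p hp.
    apply: le_trans (_ : \sum_i ((if p.1 == i then m p else 0) + (if p.2 == i then m p else 0)) <= _).
      by apply: ler_sum => i _; have := m0 p; case: (p.1 == i); case: (p.2 == i) => /= h; lra.
    rewrite big_split /= (sum_if_eq p.1 (fun=> m p)) (sum_if_eq p.2 (fun=> m p)) big_split /=.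
    have X0 : 0 <= \sum_a `|nu' p.1 p.2 a| by apply: sumr_ge0 => a _.
    have Y0 : 0 <= \sum_a `|nu' p.2 p.1 a| by apply: sumr_ge0 => a _.
    have : m p <= (\sum_a `|nu' p.1 p.2 a| + \sum_a `|nu' p.2 p.1 a|) / 2.
      apply: my_bigmax_le; first by apply: divr_ge0 => //; apply: addr_ge0.
      move=> a _; rewrite ge_max; apply/andP; split.
        by have := zero_sum_bound a (snu' p hp).1; lra.
      by have := zero_sum_bound a (snu' p hp).2; lra.
    lra.
  have B : \sum_(p in E) (mu p.1 + mu p.2) <= (max_deg E)%:R * \sum_i mu i.
    rewrite (eq_bigr (fun p => \sum_i (if (p.1 == i) || (p.2 == i) then mu i else 0))); last first.
      move=> p hp; rewrite -(sum_if_eq p.1 mu) -(sum_if_eq p.2 mu) -big_split.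
      apply: eq_bigr => i _ /=; have hn := hneq p hp.
      have [e1|e1] := eqVneq p.1 i; have [e2|e2] := eqVneq p.2 i => /=.
      - by move: hn; rewrite e1 e2 eqxx.
      - by rewrite addr0.
      - by rewrite add0r.
      - by rewrite addr0.
    rewrite exchange_big /= mulr_sumr; apply: ler_sum => i _.
    rewrite -big_mkcondr.
    rewrite (eq_bigl (fun p => p \in [set p in E | (p.1 == i) || (p.2 == i)])); last first.
      by move=> p; rewrite inE.
    rewrite sumr_const -(mulr_natr (mu i)) [X in X <= _]mulrC; apply: ler_wpM2r => //.
    rewrite ler_nat /max_deg.
    exact: leq_bigmax.
  have T1 : \sum_i \sum_a `|Gv i a - Gv' i a| <= 2 * d%:R * \sum_i mu i.
    by rewrite mulr_sumr; apply: ler_sum => i _; apply: Gv'dist.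
  have T2 : \sum_(p in E) \sum_a \sum_b `|Ge p.1 p.2 a b - Ge' p.1 p.2 a b| <=
      2 * d%:R * \sum_(p in E) (mu p.1 + mu p.2) + N.
    apply: le_trans (ler_sum _ hedge) _.
    rewrite big_split /= mulr_sumr; apply: lerD; last by [].
    rewrite le_eqVlt; apply/orP; left; apply/eqP; apply: eq_bigr => p _; ring.
  rewrite /marg_dist1.
  have D0 : 0 <= (max_deg E)%:R :> R by rewrite ler0n.
  have P1 := ler_wpM2l (ltW dpos) A.
  have P2 := ler_wpM2l (ltW dpos) B.
  have P3 := ler_wpM2l (ltW dpos) (ler_wpM2l D0 A).
  have S0 : 0 <= \sum_i mu i by apply: sumr_ge0 => i _.
  case: (set_0Vmem E) => [E0|[p0 hp0]].
  - have hN : N = 0 by rewrite /N /slack_norm1 E0 big_set0.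
    have hQ : \sum_(p in E) (mu p.1 + mu p.2) = 0 by rewrite E0 big_set0.
    rewrite hN in P1 P3 T2 *; rewrite hQ in T2; rewrite !mulr0 in P1 P3 T2 *.
    lra.
  - have D1 : 1 <= (max_deg E)%:R :> R.
      rewrite ler1n /max_deg (bigD1 p0.1) //= leq_max; apply/orP; left.
      by apply/card_gt0P; exists p0; rewrite inE hp0 eqxx.
    have P4 : d%:R * N <= d%:R * ((max_deg E)%:R * N).
      apply: ler_wpM2l; first exact: ltW.
      by rewrite -{1}(mul1r N); apply: ler_wpM2r.
    have dD1 : 1 <= d%:R * (max_deg E)%:R :> R.
      by apply: mulr_ege1 => //; rewrite ler1n.
    have P5 : N <= d%:R * ((max_deg E)%:R * N).
      by rewrite mulrA -{1}(mul1r N); apply: ler_wpM2r.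
    have P6 : 0 <= d%:R * ((max_deg E)%:R * N) by rewrite mulr_ge0 ?mulr_ge0.
    lra.
Qed.
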